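(* Let $G$ be a finite non-identity permutation group acting on a finite set $V$, let $\delta$ be the minimum degree of $G$, and suppose the distinguishing number of $G$ is at least $3$. Then $|G| \ge 1 + 2^{\delta/2}$.
   Context: For a permutation group $G$ acting on a set $V$, a partition $\pi$ of $V$ is distinguishing if the only element of $G$ fixing each cell of $\pi$ (setwise) is the identity. The distinguishing number of $G$ is the minimum number of cells in a distinguishing partition. The minimum degree of $G$ is the minimum, over non-identity elements $g\in G$, of the number of points of $V$ moved by $g$. *)

(* Defs.v *)
From mathcomp Require Import all_boot all_order all_algebra all_fingroup all_field.
Set Implicit Arguments. Unset Strict Implicit. Unset Printing Implicit Defensive.
Import Order.TTheory GRing.Theory Num.Theory.

Definition moved (T : finType) (g : {perm T}) : {set T} := [set x | g x != x].

(* Minimum degree: minimum over non-identity g in G of #|moved g|.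
   Supports have size <= #|T|, so #|T| as the neutral element of minn is
   harmless whenever G is non-identity. *)
Definition min_degree (T : finType) (G : {group {perm T}}) : nat :=
  \big[minn/#|T|]_(g in G | g != 1%g) #|moved g|.

Definition distinguishing (T : finType) (G : {group {perm T}}) (P : {set {set T}}) : bool :=
  [forall g in G, [forall B in P, g @: B == B] ==> (g == 1%g)].

(* Every partition of V has at most #|T| cells and the partition into
   singletons (with exactly #|T| cells) is always distinguishing, so #|T| as the
   neutral element of minn gives exactly the minimum. *)
Definition dist_number (T : finType) (G : {group {perm T}}) : nat :=
  \big[minn/#|T|]_(P : {set {set T}} | partition P [set: T] && distinguishing G P) #|P|.

(* Main.v *)
Require Import Defs.
From mathcomp Require Import all_boot all_order all_algebra all_fingroup all_field.
Import Order.TTheory GRing.Theory Num.Theory.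
Set Implicit Arguments. Unset Strict Implicit. Unset Printing Implicit Defensive.




Lemma inv_orbit (T : finType) (g : {perm T}) (B : {set T}) x :
  g @: B = B -> x \in B -> porbit g x \subset B.
Proof.
move=> gB xB; apply/subsetP => y /porbitP [i ->].
elim: i => [|i IH]; first by rewrite expg0 perm1.
by rewrite expgSr permM -gB imset_f.
Qed.

Lemma fix_card (T : finType) (g : {perm T}) :
  #|[set B : {set T} | g @: B == B]| <= 2 ^ #|porbits g|.
Proof.
set F := [set B : {set T} | _].
pose f (B : {set T}) := [set C in porbits g | C \subset B].
have covf : {in F, forall B, cover (f B) = B}.
  move=> B; rewrite inE => /eqP gB; apply/setP => x; apply/bigcupP/idP.
    by case=> C; rewrite inE => /andP[_ /subsetP CB] /CB.
  move=> xB; exists (porbit g x); last exact: porbit_id.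
  by rewrite inE imset_f //= inv_orbit.
have inj : {in F &, injective f}.
  by move=> B1 B2 h1 h2 e; rewrite -(covf _ h1) -(covf _ h2) e.
rewrite -(card_in_imset inj) -card_powerset; apply: subset_leq_card.
apply/subsetP => _ /imsetP[B _ ->]; rewrite inE; apply/subsetP => C.
by rewrite inE => /andP[].
Qed.

Lemma orbit_count (T : finType) (g : {perm T}) :
  2 * #|porbits g| + #|moved g| <= 2 * #|T|.
Proof.
set P := porbits g; set M := moved g.
have covT : cover P = [set: T].
  apply/setP => x; rewrite inE; apply/bigcupP; exists (porbit g x).
    exact: imset_f. exact: porbit_id.
have tiP : trivIset P.
  apply/trivIsetP => _ _ /imsetP[x _ ->] /imsetP[y _ ->] neq.
  rewrite -setI_eq0; apply/eqP/setP => z; rewrite !inE.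
  apply/negbTE/negP => /andP[zx zy]; move/negP: neq; apply.
  rewrite -eq_porbit_mem in zx; rewrite -eq_porbit_mem in zy.
  by rewrite -(eqP zx) -(eqP zy).
pose E z := 2 - (z \in M).
have h1 := @big_trivIset _ _ 0 addn _ E tiP.
rewrite covT in h1.
have h2 : 2 * #|P| <= \sum_(z in [set: T]) E z.
  rewrite h1 mulnC -sum_nat_const; apply: leq_sum => _ /imsetP[x _ ->].
  have xA := porbit_id g x.
  rewrite (bigD1 x) //=.
  case: (boolP (x \in M)) => xM; last by rewrite /E (negbTE xM) leq_addr.
  have gxM : g x != x by move: xM; rewrite inE.
  have gxA : g x \in porbit g x by have := mem_porbit g 1 x; rewrite expg1.
  rewrite (bigD1 (g x)) /=; last by rewrite gxA gxM.
  have gM : g x \in M by rewrite inE (inj_eq perm_inj).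
  by rewrite /E xM gM addnA leq_addr.
have h3 : \sum_(z in [set: T]) E z + #|M| = 2 * #|T|.
  have -> : \sum_(z in [set: T]) E z = \sum_z E z by apply: eq_bigl => z; rewrite inE.
  have -> : #|M| = \sum_z (z \in M : nat).
    by rewrite -sum1_card big_mkcond; apply: eq_bigr => z _; case: (z \in M).
  rewrite -big_split /= mulnC -sum_nat_const.
  apply: eq_bigr => z _; rewrite /E.
  by case: (z \in M).
by rewrite -h3 leq_add2r.
Qed.



Lemma bigmin_le (I : finType) (P : pred I) (F : I -> nat) x i0 :
  P i0 -> \big[minn/x]_(i | P i) F i <= F i0.
Proof.
move=> Pi; rewrite -big_filter.
have : i0 \in [seq i <- index_enum I | P i] by rewrite mem_filter Pi mem_index_enum.
elim: [seq i <- index_enum I | P i] => //= a s IH; rewrite inE big_cons.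
case/orP => [/eqP<-|/IH h]; first exact: geq_minl.
exact: leq_trans (geq_minr _ _) h.
Qed.

Lemma all_fixed (T : finType) (G : {group {perm T}}) (B : {set T}) :
  3 <= dist_number G -> exists2 g, g \in G :\ 1%g & g @: B == B.
Proof.
move=> h3; case: (boolP [exists g in G :\ 1%g, g @: B == B]) => [/exists_inP //|hn0].
have hn : forall g, g \in G :\ 1%g -> g @: B != B.
  by move=> g gH; apply: contra hn0 => e; apply/exists_inP; exists g.
pose P := [set B; ~: B] :\ set0.
have hd : distinguishing G P.
  apply/forallP => g; apply/implyP => gG; apply/implyP => /forallP hP.
  have gB : g @: B == B.
    case: (eqVneq B set0) => [->|Bn]; first by rewrite imset0.
    by have := hP B; rewrite !inE Bn eqxx /=.
  apply/negPn/negP => g1; have := hn g; rewrite !inE gG g1 gB.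
  by move/(_ isT).
have hpart : partition P [set: T].
  apply/and3P; split.
  - apply/eqP/setP => x; rewrite inE; apply/bigcupP.
    case: (boolP (x \in B)) => xB.
      by exists B => //; rewrite !inE eqxx ?orbT ?andbT /=; apply/set0Pn; exists x.
    exists (~: B); last by rewrite inE.
    by rewrite !inE eqxx ?orbT ?andbT /=; apply/set0Pn; exists x; rewrite inE.
  - apply/trivIsetP => X Y; rewrite !inE => /andP[_ /orP[]/eqP->] /andP[_ /orP[]/eqP->];
      rewrite ?eqxx // => _; rewrite -setI_eq0 ?setICr // setIC setICr //.
  - by rewrite !inE eqxx.
have hc : #|P| <= 2.
  apply: leq_trans (subset_leq_card (subsetDl _ _)) _.
  by rewrite cards2; case: (_ != _).
have : dist_number G <= 2.
  apply: leq_trans hc; apply: bigmin_le; by rewrite hpart hd.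
by rewrite leqNgt h3.
Qed.

Lemma nat_bound (T : finType) (G : {group {perm T}}) :
  G != 1%G -> 3 <= dist_number G -> 2 ^ min_degree G <= #|G :\ 1%g| ^ 2.
Proof.
move=> hG h3.
set H := G :\ 1%g.
pose c (g : {perm T}) := #|porbits g|.
have hH : 0 < #|H|.
  have : G :!=: 1%g by apply: contra hG => /eqP e; apply/eqP; apply: val_inj.
  case/trivgPn => g gG g1; rewrite card_gt0; apply/set0Pn; exists g.
  by rewrite !inE g1 gG.
have [g0 g0H hmax] := eq_bigmax_cond c hH.
have cle : forall g, g \in H -> c g <= c g0.
  by move=> g gH; rewrite -hmax; apply: leq_bigmax_cond.
have h2n : 2 ^ #|T| <= #|H| * 2 ^ c g0.
  rewrite -cardsT -card_powerset -sum1_card.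
  apply: (@leq_trans (\sum_(B in powerset [set: T]) \sum_(g in H) (g @: B == B : nat))).
    apply: leq_sum => B _; have [g gH e] := all_fixed B h3.
    by rewrite (bigD1 g) //= e.
  rewrite exchange_big /= -sum_nat_const; apply: leq_sum => g gH.
  apply: (@leq_trans #|[set B : {set T} | g @: B == B]|); last first.
    by apply: leq_trans (fix_card g) _; rewrite leq_pexp2l // cle.
  rewrite -sum1_card big_mkcond [X in _ <= X]big_mkcond /=.
  apply: leq_sum => B _; rewrite !inE subsetT; by case: (_ == _).
have hd : min_degree G <= #|moved g0|.
  by apply: bigmin_le; move: g0H; rewrite !inE => /andP[-> ->].
have hoc := orbit_count g0.
have h1 : 2 ^ min_degree G * 2 ^ (c g0 * 2) <= 2 ^ (#|T| * 2).
  rewrite -expnD leq_pexp2l //.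
  rewrite [X in _ <= X]mulnC; apply: leq_trans _ hoc; by rewrite addnC mulnC leq_add2l.
have h2 : 2 ^ (#|T| * 2) <= #|H| ^ 2 * 2 ^ (c g0 * 2).
  by rewrite !expnM -expnMn leq_exp2r.
have := leq_trans h1 h2.
by rewrite leq_pmul2r ?expn_gt0.
Qed.

Theorem lemma1 (T : finType) (G : {group {perm T}}) :
  G != 1%G -> 3 <= dist_number G ->
  ((1 + sqrtC 2 ^+ min_degree G : algC) <= (#|G|%:R : algC))%R.
Proof.
move=> hG h3; have hb := nat_bound hG h3.
have -> : #|G| = 1 + #|G :\ 1%g| by rewrite (cardsD1 1%g) group1.
rewrite natrD lerD2l.
have s0 : (0 <= (sqrtC 2 : algC))%R by rewrite sqrtC_ge0 ler0n.
rewrite -(ler_pXn2r (n := 2)) // ?inE ?exprn_ge0 ?ler0n //.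
- rewrite -exprM mulnC exprM sqrtCK -!natrX ler_nat //.
- by rewrite qualifE /= exprn_ge0.
- by rewrite qualifE /= ler0n.
Qed.
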